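(* Let $G$ be a graph with an even number of edges. Suppose there is a positive integer $t$ such that $G$ contains at least $t$ pairwise vertex-disjoint induced copies of $F$ and $G$ contains no clique with more than $t$ vertices. Then $G$ is even-decomposable.
   Context: $F$ denotes the disjoint union of two vertex-disjoint copies of $K_{5,5}$. A graph $H$ is even-decomposable if there is a sequence $V(H)=V_0\supset V_1\supset\cdots\supset V_k=\emptyset$ such that for each $0\le i\le k-1$, $H[V_i]$ has an even number of edges and $V_i\setminus V_{i+1}$ is an independent set in $H$. *)

(* Defs.v *)
From mathcomp Require Import all_boot.
Set Implicit Arguments. Unset Strict Implicit. Unset Printing Implicit Defensive.

(* A simple graph on a finite vertex type T is a symmetric irreflexive
   relation e : rel T. *)

Definition edge_count (T : finType) (e : rel T) (S : {set T}) : nat :=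
  #|[set E in powerset S | (#|E| == 2) &&
       [forall x in E, forall y in E, (x != y) ==> e x y]]|.

Definition independent (T : finType) (e : rel T) (A : {set T}) : bool :=
  [forall x in A, forall y in A, ~~ e x y].

Definition clique (T : finType) (e : rel T) (A : {set T}) : bool :=
  [forall x in A, forall y in A, (x != y) ==> e x y].

Definition even_decomposable (T : finType) (e : rel T) : Prop :=
  exists (k : nat) (V : nat -> {set T}),
    [/\ V 0 = [set: T], V k = set0 &
        forall i, i < k ->
          [/\ V i.+1 \proper V i, ~~ odd (edge_count e (V i))
            & independent e (V i :\: V i.+1)]].

(* The graph F = two vertex-disjoint copies of K_{5,5}.
   Vertex (c, (s, j)): copy c, side s, index j. *)
Definition FV := ('I_2 * ('I_2 * 'I_5))%type.
Definition Fadj (u v : FV) : bool := (u.1 == v.1) && (u.2.1 != v.2.1).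

Definition induced_copy_F (T : finType) (e : rel T) (f : FV -> T) : Prop :=
  injective f /\ forall u v, e (f u) (f v) = Fadj u v.

(* Main.v *)
Require Import Defs.
From mathcomp Require Import all_boot zify.
Set Implicit Arguments. Unset Strict Implicit. Unset Printing Implicit Defensive.

Section G.
Variable T : finType.
Variable e : rel T.
Hypothesis esymm : symmetric e.
Hypothesis eirr : irreflexive e.

Definition deg (S : {set T}) v := #|[set u in S | e v u]|.

Lemma ecD1 (S : {set T}) v : v \in S -> edge_count e S = edge_count e (S :\ v) + deg S v.
Proof.
move=> vS; rewrite /edge_count.
set P := fun E : {set T} => (#|E| == 2) && [forall x in E, forall y in E, (x != y) ==> e x y].
rewrite -(cardsID [set E : {set T} | v \in E]) addnC; congr (_ + _).
  apply: eq_card => E; rewrite !inE ?powersetE ?subsetD1 -?andbA.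
  by case: (E \subset S); case: (v \in E).
rewrite /deg -(@card_in_imset _ _ (fun u => [set v; u])).
  apply: eq_card => E; rewrite !inE.
  apply/idP/idP.
    case/andP=> /andP [ES /andP [/cards2P [x [y [xy Exy]]] /forallP cl]] vE; subst E.
    have cl' : forall a b, a \in [set x; y] -> b \in [set x; y] -> a != b -> e a b.
      by move=> a b aE bE ab; have := cl a; rewrite aE /= => /forallP /(_ b); rewrite bE ab.
    apply/imsetP.
    move: vE; rewrite !inE => /orP [] /eqP vx; subst v.
      exists y; last by [].
      rewrite inE (subsetP ES) ?inE ?eqxx ?orbT //=.
      by apply: cl'; rewrite ?inE ?eqxx ?orbT.
    exists x; last by rewrite setUC.
    rewrite inE (subsetP ES) ?inE ?eqxx ?orbT //=.
    by apply: cl'; rewrite ?inE ?eqxx ?orbT // eq_sym.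
  case/imsetP=> u; rewrite inE => /andP [uS evu] ->.
  have vu : v != u by apply: contraTneq evu => ->; rewrite eirr.
  rewrite !inE eqxx /= andbT cards2 vu /=.
  apply/andP; split.
    by apply/subsetP=> x; rewrite !inE => /orP [] /eqP ->.
  apply/forallP=> a; apply/implyP; rewrite !inE => /orP [] /eqP ->; apply/forallP=> b; apply/implyP;
    rewrite !inE => /orP [] /eqP ->; by rewrite ?eqxx //= ?(esymm u v) ?evu ?implybT.
move=> a b; rewrite !inE => /andP [_ ea] /andP [_ eb] /setP H.
have := H a; rewrite !inE eqxx orbT /= => /esym /orP [] /eqP // av.
by move: ea; rewrite av eirr.
Qed.

Notation ec := (edge_count e).

Lemma degD1 (S : {set T}) v y : deg S v = deg (S :\ y) v + ((y \in S) && e v y).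
Proof.
rewrite /deg (cardsD1 y) addnC inE; congr (_ + _).
by apply: eq_card => u; rewrite !inE andbA.
Qed.

Lemma degD1n (S : {set T}) v y : ~~ e v y -> deg (S :\ y) v = deg S v.
Proof. by move=> h; rewrite (degD1 S v y) (negbTE h) andbF addn0. Qed.

Lemma ecD1odd (S : {set T}) v : v \in S -> odd (ec (S :\ v)) = odd (ec S) (+) odd (deg S v).
Proof. by move=> vS; rewrite (ecD1 vS) oddD -addbA addbb addbF. Qed.

Definition dec (S : {set T}) := exists k (V : nat -> {set T}),
  [/\ V 0 = S, V k = set0 & forall i, i < k ->
     [/\ V i.+1 \proper V i, ~~ odd (ec (V i)) & independent e (V i :\: V i.+1)]].

Lemma dec0 : dec set0.
Proof. by exists 0, (fun _ => set0); split. Qed.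

Lemma dec_step (S X : {set T}) : X \subset S -> X != set0 -> independent e X ->
  ~~ odd (ec S) -> dec (S :\: X) -> dec S.
Proof.
move=> XS X0 iX eS [k [V [V0 Vk HV]]].
exists k.+1, (fun i => if i is i'.+1 then V i' else S); split => //.
case=> [|i] /=.
  move=> _; rewrite V0; split => //.
    rewrite properEneq subsetDl andbT; case/set0Pn: X0 => x xX; apply/eqP => H.
    by have := subsetP XS x xX; rewrite -H inE xX.
  have -> : S :\: (S :\: X) = X by rewrite setDDr setDv set0U; apply/setIidPr.
  done.
by move=> ik; apply: HV.
Qed.

Definition reach (S S' : {set T}) := [/\ S' \subset S, ~~ odd (ec S') & (dec S' -> dec S)].

Lemma reach_refl (S : {set T}) : ~~ odd (ec S) -> reach S S.
Proof. by move=> h; split. Qed.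

Lemma reach_trans S1 S2 S3 : reach S1 S2 -> reach S2 S3 -> reach S1 S3.
Proof.
case=> s12 _ d12 [s23 e3 d23]; split => //; first exact: subset_trans s23 s12.
by move=> /d23 /d12.
Qed.

Lemma reach1 (S : {set T}) v : v \in S -> ~~ odd (ec S) -> ~~ odd (deg S v) -> reach S (S :\ v).
Proof.
move=> vS eS dv; split; first exact: subsetDl.
  by rewrite ecD1odd // (negbTE eS) (negbTE dv).
move=> d; apply: (@dec_step S [set v]) => //.
- by rewrite sub1set.
- by apply/eqP => /setP /(_ v); rewrite !inE eqxx.
- by apply/forallP => x; apply/implyP; rewrite inE => /eqP ->; apply/forallP => y; apply/implyP; rewrite inE => /eqP ->; rewrite eirr.
Qed.

Lemma reach2 (S : {set T}) u v : u \in S -> v \in S -> u != v -> ~~ e u v -> ~~ odd (ec S) ->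
  odd (deg S u) = odd (deg S v) -> reach S (S :\ u :\ v).
Proof.
move=> uS vS uv nuv eS duv; split; first by apply: subset_trans (subsetDl _ _) (subsetDl _ _).
  rewrite ecD1odd; last by rewrite !inE eq_sym uv.
  rewrite ecD1odd // degD1n; last by rewrite esymm.
  by rewrite (negbTE eS) duv addbb.
move=> d; apply: (@dec_step S [set u; v]) => //.
- by apply/subsetP => x; rewrite !inE => /orP [] /eqP ->.
- by apply/eqP => /setP /(_ u); rewrite !inE eqxx.
- apply/forallP => x; apply/implyP; rewrite !inE => /orP [] /eqP ->; apply/forallP => y; apply/implyP;
    rewrite !inE => /orP [] /eqP ->; by rewrite ?eirr // esymm.
- by have -> : S :\: [set u; v] = S :\ u :\ v by apply/setP => x; rewrite !inE negb_or; case: (x == u); case: (x == v).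
Qed.

Lemma setD_D1 (S Z : {set T}) v : v \in Z -> (S :\ v) :\: (Z :\ v) = S :\: Z.
Proof.
move=> vZ; apply/setP => x; rewrite !inE.
by case: (eqVneq x v) => [->|] //=; rewrite vZ /= ?andbF.
Qed.

Lemma tf_remove n : forall (Z S : {set T}), #|Z| <= n -> Z \subset S ->
  (forall a b c, a \in Z -> b \in Z -> c \in Z -> e a b -> e b c -> e a c -> False) ->
  ~~ odd (ec S) -> ~~ odd (ec (S :\: Z)) -> reach S (S :\: Z).
Proof.
elim: n => [|n IH] Z S cZ ZS tri eS eSZ.
  move: cZ; rewrite leqn0 cards_eq0 => /eqP ->; rewrite setD0; exact: reach_refl.
case: (eqVneq Z set0) => [-> | Z0]; first by rewrite setD0; apply: reach_refl.
case: (boolP [exists v in Z, ~~ odd (deg S v)]) => [/existsP [v /andP [vZ dv]] | noev].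
  have vS := subsetP ZS v vZ.
  have r1 := reach1 vS eS dv.
  apply: (reach_trans r1); rewrite -(setD_D1 S vZ).
  case: r1 => _ e1 _.
  apply: IH => //.
  - by move: cZ; rewrite (cardsD1 v Z) vZ.
  - by apply/subsetP => x; rewrite !inE => /andP [-> /(subsetP ZS) ->].
  - by move=> a b c; rewrite !inE => /andP [_ aZ] /andP [_ bZ] /andP [_ cZ']; apply: tri.
  - by rewrite setD_D1.
have allodd : forall v, v \in Z -> odd (deg S v).
  by move=> v vZ; apply: contraR noev => h; apply/existsP; exists v; rewrite vZ.
case: (boolP [exists u in Z, exists v in Z, (u != v) && ~~ e u v]) => [/existsP [u /andP [uZ /existsP [v /andP [vZ /andP [uv nuv]]]]] | nopair].
  have uS := subsetP ZS u uZ; have vS := subsetP ZS v vZ.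
  have r2 := reach2 uS vS uv nuv eS (etrans (allodd u uZ) (esym (allodd v vZ))).
  apply: (reach_trans r2).
  have vZ' : v \in Z :\ u by rewrite !inE eq_sym uv.
  rewrite -(setD_D1 S uZ) -(setD_D1 (S :\ u) vZ').
  case: r2 => _ e2 _.
  apply: IH => //.
  - move: cZ; rewrite (cardsD1 u Z) uZ (cardsD1 v (Z :\ u)) vZ' add1n ltnS => h.
    exact: leq_trans (leq_addl _ _) h.
  - by apply/subsetP => x; rewrite !inE => /andP [-> /andP [-> /(subsetP ZS) ->]].
  - by move=> a b c; rewrite !inE => /and3P [_ _ aZ] /and3P [_ _ bZ] /and3P [_ _ cZ']; apply: tri.
  - by rewrite setD_D1 // setD_D1.
have adj : forall u v, u \in Z -> v \in Z -> u != v -> e u v.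
  move=> u v uZ vZ uv; apply: contraR nopair => h; apply/existsP; exists u; rewrite uZ.
  by apply/existsP; exists v; rewrite vZ uv.
case/set0Pn: Z0 => v vZ; have vS := subsetP ZS v vZ.
case: (eqVneq (Z :\ v) set0) => [Zv0 | /set0Pn [u]].
  have SZ : S :\: Z = S :\ v.
    apply/setP => x; rewrite !inE; case: (eqVneq x v) => [->|xv]; first by rewrite vZ.
    by have := Zv0; move/setP/(_ x); rewrite !inE xv /= => ->.
  by move: eSZ; rewrite SZ ecD1odd // (negbTE eS) allodd.
rewrite !inE => /andP [uv uZ]; have uS := subsetP ZS u uZ.
case: (eqVneq ((Z :\ v) :\ u) set0) => [Zvu0 | /set0Pn [w]].
  have SZ : S :\: Z = S :\ v :\ u.
    apply/setP => x; rewrite !inE; case: (eqVneq x v) => [->|xv]; first by rewrite vZ andbF.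
    case: (eqVneq x u) => [->|xu]; first by rewrite uZ.
    by have := Zvu0; move/setP/(_ x); rewrite !inE xv xu /= => ->.
  move: eSZ; rewrite SZ ecD1odd; last by rewrite !inE uv.
  rewrite ecD1odd // (negbTE eS) allodd //.
  have := allodd u uZ; rewrite (degD1 S u v) vS (adj u v uZ vZ uv) addn1 /=.
  by case: (odd _).
rewrite !inE => /and3P [wu wv wZ].
by case: (tri v u w vZ uZ wZ); apply: adj => //; rewrite eq_sym.
Qed.

Definition Good (S : {set T}) q (R : {set T}) :=
  exists S', [/\ reach S S', q \notin S' & forall x, x \in S -> x \notin S' -> x \in R].

Lemma Good_q (S R : {set T}) q : q \in S -> q \in R -> ~~ odd (ec S) -> ~~ odd (deg S q) -> Good S q R.
Proof.
move=> qS qR eS dq; exists (S :\ q); split; first exact: reach1.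
  by rewrite !inE eqxx.
by move=> x xS; rewrite !inE xS andbT negbK => /eqP ->.
Qed.

Lemma Good_pair (S R : {set T}) q y : q \in S -> y \in S -> q \in R -> y \in R -> q != y ->
  ~~ e q y -> ~~ odd (ec S) -> odd (deg S q) -> odd (deg S y) -> Good S q R.
Proof.
move=> qS yS qR yR qy nqy eS dq dy; exists (S :\ q :\ y); split.
- by apply: reach2 => //; rewrite dq dy.
- by rewrite !inE eqxx andbF.
- by move=> x xS; rewrite !inE xS !andbT negb_and !negbK => /orP [] /eqP ->.
Qed.

Lemma Good_nb (S R : {set T}) q y : q \in S -> y \in S -> q \in R -> y \in R -> q != y ->
  e q y -> ~~ odd (ec S) -> odd (deg S q) -> ~~ odd (deg S y) -> Good S q R.
Proof.
move=> qS yS qR yR qy eqy eS dq dy.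
have r1 := reach1 yS eS dy; case: (r1) => _ e1 _.
have qS1 : q \in S :\ y by rewrite !inE qy qS.
have dq1 : ~~ odd (deg (S :\ y) q).
  by move: dq; rewrite (degD1 S q y) yS eqy addn1 /=.
have r2 := reach1 qS1 e1 dq1.
exists (S :\ y :\ q); split.
- exact: reach_trans r1 r2.
- by rewrite !inE eqxx.
- by move=> x xS; rewrite !inE xS !andbT negb_and !negbK => /orP [] /eqP ->.
Qed.

Lemma Good_one (S R : {set T}) q y : q \in S -> y \in S -> q \in R -> y \in R -> q != y ->
  ~~ odd (ec S) -> odd (deg S q) -> odd (deg S y) != e q y -> Good S q R.
Proof.
move=> qS yS qR yR qy eS dq.
case: (boolP (e q y)) => eqy h.
  by apply: (Good_nb qS yS) => //; move: h; case: (odd _).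
by apply: (Good_pair qS yS) => //; move: h; case: (odd _).
Qed.

Lemma Good_comp (S S1 R : {set T}) q : reach S S1 ->
  (forall x, x \in S -> x \notin S1 -> x \in R) -> Good S1 q R -> Good S q R.
Proof.
move=> r h [S' [r' qS' h']]; exists S'; split => //; first exact: reach_trans r r'.
move=> x xS xS'; case: (boolP (x \in S1)) => xS1; first exact: h'.
exact: h.
Qed.

Lemma Good_4a (S R : {set T}) q y b : q \in S -> y \in S -> b \in S -> q \in R -> y \in R -> b \in R ->
  q != y -> q != b -> e y b -> ~~ e q y -> ~~ odd (ec S) -> odd (deg S q) -> ~~ odd (deg S y) ->
  odd (deg S b) = e q b -> Good S q R.
Proof.
move=> qS yS bS qR yR bR qy qb eyb nqy eS dq dy db.
have r1 := reach1 yS eS dy; case: (r1) => _ e1 _.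
have yb : y != b by apply: contraTneq eyb => ->; rewrite eirr.
have qS1 : q \in S :\ y by rewrite !inE qy qS.
have bS1 : b \in S :\ y by rewrite !inE eq_sym yb bS.
have dq1 : odd (deg (S :\ y) q) by rewrite degD1n.
have db1 : odd (deg (S :\ y) b) = ~~ e q b.
  by rewrite -db (degD1 S b y) yS esymm eyb addn1 /= negbK.
apply: (Good_comp r1).
  by move=> x xS; rewrite !inE xS andbT negbK => /eqP ->.
case: (boolP (e q b)) => eqb.
  by apply: (Good_nb qS1 bS1) => //; rewrite db1 eqb.
by apply: (Good_pair qS1 bS1) => //; rewrite db1.
Qed.

Lemma Good_4b (S R : {set T}) q x1 z1 x2 : q \in S -> x1 \in S -> z1 \in S -> x2 \in S ->
  q \in R -> x1 \in R -> z1 \in R -> x2 \in R ->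
  q != x1 -> q != z1 -> q != x2 -> x1 != x2 ->
  e x1 z1 -> ~~ e x1 x2 -> ~~ e z1 x2 -> e q x1 -> e q z1 -> e q x2 ->
  ~~ odd (ec S) -> odd (deg S q) -> odd (deg S x1) -> odd (deg S z1) -> odd (deg S x2) -> Good S q R.
Proof.
move=> qS x1S z1S x2S qR x1R z1R x2R qx1 qz1 qx2 x12 e11 n12 nz12 eq1 eqz eq2 eS dq d1 dz d2.
have r1 := reach2 x1S x2S x12 n12 eS (etrans d1 (esym d2)); case: (r1) => _ e1 _.
have z1x1 : z1 != x1 by apply: contraTneq e11 => ->; rewrite eirr.
have z1x2 : z1 != x2 by apply/eqP => h; move: n12; rewrite -h e11.
have z1S1 : z1 \in S :\ x1 :\ x2 by rewrite !inE z1x1 z1x2 z1S.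
have dz1 : ~~ odd (deg (S :\ x1 :\ x2) z1).
  rewrite (degD1n _ nz12); move: dz; rewrite (degD1 S z1 x1) x1S (esymm z1 x1) e11 andbT oddD oddb addbT; by [].
have r2 := reach1 z1S1 e1 dz1; case: (r2) => _ e2 _.
have qS2 : q \in S :\ x1 :\ x2 :\ z1 by rewrite !inE qx1 qx2 qz1 qS.
apply: (Good_comp (reach_trans r1 r2)).
  move=> x xS; rewrite !inE xS andbT.
  by case: (eqVneq x z1) => [->|] //; case: (eqVneq x x2) => [->|] //; case: (eqVneq x x1) => [->|].
apply: Good_q => //.
have h1 : deg S q = deg (S :\ x1) q + 1 by rewrite (degD1 S q x1) x1S eq1.
have x2S1 : x2 \in S :\ x1 by rewrite !inE (eq_sym x2 x1) x12 x2S.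
have h2 : deg (S :\ x1) q = deg (S :\ x1 :\ x2) q + 1 by rewrite (degD1 _ q x2) x2S1 eq2.
have h3 : deg (S :\ x1 :\ x2) q = deg (S :\ x1 :\ x2 :\ z1) q + 1 by rewrite (degD1 _ q z1) z1S1 eqz.
by move: dq; rewrite h1 h2 h3 !oddD !addbT !negbK.
Qed.

Lemma kill (S : {set T}) q x1 z1 x2 z2 :
  q \in S -> x1 \in S -> z1 \in S -> x2 \in S -> z2 \in S ->
  q != x1 -> q != z1 -> q != x2 -> q != z2 ->
  e x1 z1 -> e x2 z2 -> ~~ e x1 x2 -> ~~ e x1 z2 -> ~~ e z1 x2 -> ~~ e z1 z2 ->
  ~~ odd (ec S) -> Good S q [set q; x1; z1; x2; z2].
Proof.
move=> qS x1S z1S x2S z2S qx1 qz1 qx2 qz2 e11 e22 n12 n1z nz1 nzz eS.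
set R := [set q; x1; z1; x2; z2].
have qR : q \in R by rewrite !inE eqxx.
have x1R : x1 \in R by rewrite !inE eqxx !orbT.
have z1R : z1 \in R by rewrite !inE eqxx !orbT.
have x2R : x2 \in R by rewrite !inE eqxx !orbT.
have z2R : z2 \in R by rewrite !inE eqxx !orbT.
case: (boolP (odd (deg S q))) => dq; last exact: Good_q.
case: (boolP (odd (deg S x1) != e q x1)) => h1; first exact: (Good_one qS x1S qR x1R qx1 eS dq h1).
case: (boolP (odd (deg S z1) != e q z1)) => h2; first exact: (Good_one qS z1S qR z1R qz1 eS dq h2).
case: (boolP (odd (deg S x2) != e q x2)) => h3; first exact: (Good_one qS x2S qR x2R qx2 eS dq h3).
case: (boolP (odd (deg S z2) != e q z2)) => h4; first exact: (Good_one qS z2S qR z2R qz2 eS dq h4).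
move: h1 h2 h3 h4; rewrite !negbK => /eqP h1 /eqP h2 /eqP h3 /eqP h4.
have x12 : x1 != x2 by apply: contraTneq e22 => <-; rewrite (negbTE n1z).
case: (boolP (e q x1)) => q1; last first.
  apply: (Good_4a qS x1S z1S qR x1R z1R qx1 qz1 e11 q1 eS dq _ h2).
  by rewrite h1 (negbTE q1).
case: (boolP (e q z1)) => q2; last first.
  apply: (Good_4a qS z1S x1S qR z1R x1R qz1 qx1 _ q2 eS dq _ h1); first by rewrite esymm.
  by rewrite h2 (negbTE q2).
case: (boolP (e q x2)) => q3; last first.
  apply: (Good_4a qS x2S z2S qR x2R z2R qx2 qz2 e22 q3 eS dq _ h4).
  by rewrite h3 (negbTE q3).
case: (boolP (e q z2)) => q4; last first.
  apply: (Good_4a qS z2S x2S qR z2R x2R qz2 qx2 _ q4 eS dq _ h3); first by rewrite esymm.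
  by rewrite h4 (negbTE q4).
apply: (Good_4b qS x1S z1S x2S qR x1R z1R x2R qx1 qz1 qx2 x12 e11 n12 nz1 q1 q2 q3 eS dq).
- by rewrite h1.
- by rewrite h2.
- by rewrite h3.
Qed.

Definition Dset s (f : 'I_s -> FV -> T) : {set T} := [set x | [exists i, [exists u, f i u == x]]].

Lemma inD s (f : 'I_s -> FV -> T) i u : f i u \in Dset f.
Proof. by rewrite inE; apply/existsP; exists i; apply/existsP; exists u. Qed.

Lemma mem5 (x a b c d g : T) : x \in [set a; b; c; d; g] -> x = a \/ x = b \/ x = c \/ x = d \/ x = g.
Proof.
rewrite !inE => h.
case: (eqVneq x a) h => [->|_] /=; first by left.
case: (eqVneq x b) => [->|_] /=; first by right; left.
case: (eqVneq x c) => [->|_] /=; first by do 2 right; left.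
case: (eqVneq x d) => [->|_] /=; first by do 3 right; left.
by move/eqP; do 4 right.
Qed.

Definition o0 : 'I_2 := ord0.
Definition o1 : 'I_2 := ord_max.

Lemma killmany s (f : 'I_s.+1 -> FV -> T) (S : {set T}) :
  (forall i, induced_copy_F e (f i)) ->
  (forall i u, f i u \in S) -> ~~ odd (ec S) ->
  forall k, k <= 3 -> exists S1, [/\ reach S S1,
    (forall x, x \in S -> x \notin S1 -> x \notin Dset f \/
        exists c sg (j : 'I_5), j < k /\ x = f ord0 (c, (sg, j))),
    (#|S1 :\: Dset f| + k <= #|S :\: Dset f| \/ S1 :\: Dset f = set0) &
    (forall c sg (j : 'I_5), k <= j -> f ord0 (c, (sg, j)) \in S1)].
Proof.
move=> hc hin eS; elim=> [|k IH] hk.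
  exists S; split.
  - exact: reach_refl.
  - by move=> x ->.
  - by left; rewrite addn0.
  - by move=> *; apply: hin.
have [S1 [r1 rem1 card1 sl1]] := IH (ltnW hk).
case: (eqVneq (S1 :\: Dset f) set0) => [E0 | /set0Pn [y yW]].
  exists S1; split => //.
  - move=> x xS xS1; case: (rem1 x xS xS1) => [h|[c [sg [j [jk ->]]]]]; first by left.
    by right; exists c, sg, j; split => //; apply: ltnW.
  - by right.
  - by move=> c sg j kj; apply: sl1; apply: ltnW.
have k5 : k < 5 by apply: leq_trans hk _.
set j : 'I_5 := inord k.
have jk : nat_of_ord j = k by rewrite inordK.
set x1 := f ord0 (o0, (o0, j)); set z1 := f ord0 (o0, (o1, j)).
set x2 := f ord0 (o1, (o0, j)); set z2 := f ord0 (o1, (o1, j)).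
have adj u v : e (f ord0 u) (f ord0 v) = Fadj u v by case: (hc ord0) => _ ->.
move: yW; rewrite inE => /andP [yD yS1].
have ne u : y != f ord0 u by apply: contraNneq yD => ->; apply: inD.
have slS1 c sg : f ord0 (c, (sg, j)) \in S1 by apply: sl1; rewrite jk.
case: (r1) => s1 e1 _.
have [S2 [r2 yS2 rem2]] : Good S1 y [set y; x1; z1; x2; z2].
  apply: (kill yS1 (slS1 o0 o0) (slS1 o0 o1) (slS1 o1 o0) (slS1 o1 o1) (ne _) (ne _) (ne _) (ne _)) => //;
    by rewrite adj.
case: (r2) => s2 e2 _.
have finj := (hc ord0).1.
exists S2; split.
- exact: reach_trans r1 r2.
- move=> x xS xS2; case: (boolP (x \in S1)) => xS1; last first.
    case: (rem1 x xS xS1) => [h|[c [sg [j' [jk' ->]]]]]; first by left.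
    by right; exists c, sg, j'; split => //; apply: ltnW.
  case/mem5: (rem2 x xS1 xS2) => [->|[->|[->|[->|->]]]]; first by left.
  + by right; exists o0, o0, j; rewrite jk.
  + by right; exists o0, o1, j; rewrite jk.
  + by right; exists o1, o0, j; rewrite jk.
  + by right; exists o1, o1, j; rewrite jk.
- left; case: card1 => [h|h]; last by move: h => /setP /(_ y); rewrite in_setD yD yS1 in_set0.
  rewrite addnS; apply: leq_trans h; rewrite ltn_add2r; apply: proper_card.
  rewrite properE; apply/andP; split.
    by apply/subsetP => x; rewrite !inE => /andP [-> /(subsetP s2) ->].
  by apply/subsetPn; exists y; rewrite !in_setD ?yD ?yS1 ?(negbTE yS2) ?andbF.
- move=> c sg j' kj'; have := sl1 c sg j' (ltnW kj').
  case: (boolP (f ord0 (c, (sg, j')) \in S2)) => // h1 h2.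
  case/mem5: (rem2 _ h2 h1) => [h|[h|[h|[h|h]]]].
  + by move: yD; rewrite -h inD.
  + by move/finj: h => [_ _ h]; move: kj'; rewrite h jk ltnn.
  + by move/finj: h => [_ _ h]; move: kj'; rewrite h jk ltnn.
  + by move/finj: h => [_ _ h]; move: kj'; rewrite h jk ltnn.
  + by move/finj: h => [_ _ h]; move: kj'; rewrite h jk ltnn.
Qed.

Lemma Fadj_tri (u v w : FV) : Fadj u v -> Fadj v w -> Fadj u w -> False.
Proof.
case: u => cu [su ju]; case: v => cv [sv jv]; case: w => cw [sw jw]; rewrite /Fadj /=.
move=> /andP [_ h1] /andP [_ h2] /andP [_ h3].
move: su sv sw h1 h2 h3 => [[|[|?]] ?] [[|[|?]] ?] [[|[|?]] ?] //.
Qed.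

Lemma step s (f : 'I_s.+1 -> FV -> T) (S : {set T}) :
  (forall i, induced_copy_F e (f i)) -> (forall i j u v, f i u = f j v -> i = j) ->
  (forall i u, f i u \in S) -> #|S :\: Dset f| <= s + 3 -> ~~ odd (ec S) ->
  (forall (g : 'I_s -> FV -> T) (S' : {set T}), (forall i, induced_copy_F e (g i)) ->
     (forall i j u v, g i u = g j v -> i = j) -> (forall i u, g i u \in S') ->
     (forall A : {set T}, A \subset S' :\: Dset g -> clique e A -> #|A| <= s + 2) ->
     ~~ odd (ec S') -> dec S') -> dec S.
Proof.
move=> hc hdj hin hcard eS IH.
have [S1 [r1 rem1 card1 sl1]] := killmany hc hin eS (leqnn 3).
case: (r1) => s1 e1 d1.
set C0 := [set f ord0 u | u : FV].
set R := S1 :&: C0.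
set W := S1 :\: C0.
have adj u v : e (f ord0 u) (f ord0 v) = Fadj u v by case: (hc ord0) => _ ->.
set j3 : 'I_5 := inord 3.
set h := f ord0 (o0, (o0, j3)); set h' := f ord0 (o0, (o1, j3)).
have j3v : nat_of_ord j3 = 3 by rewrite inordK.
have hR : h \in R by rewrite inE sl1 ?j3v // imset_f.
have h'R : h' \in R by rewrite inE sl1 ?j3v // imset_f.
have RnW x : x \in R -> x \notin W by rewrite !inE => /andP [_ ->].
have [L [LR Lc eL]] : exists L : {set T}, [/\ L \subset R, #|L| <= 2 & ~~ odd (ec (W :|: L))].
  case: (boolP (odd (ec W))) => eW; last by exists set0; rewrite setU0 sub0set cards0.
  case: (boolP [exists x in R, odd (deg (x |: W) x)]) => [/existsP [x /andP [xR dx]] | nodx].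
    exists [set x]; split; first by rewrite sub1set.
      by rewrite cards1.
    rewrite setUC (ecD1 (setU11 x W)) setU1K ?RnW //.
    by rewrite oddD dx eW.
  have evx x : x \in R -> ~~ odd (deg (x |: W) x).
    by move=> xR; apply: contra nodx => dx; apply/existsP; exists x; rewrite xR.
  have hh' : h != h' by apply/eqP => /(hc ord0).1 /(congr1 (fun u : FV => nat_of_ord u.2.1)).
  exists [set h; h']; split.
  - by apply/subsetP => x; rewrite in_set2 => /orP [] /eqP ->.
  - by rewrite cards2 hh'.
  have E1 : W :|: [set h; h'] = h' |: (h |: W).
    by apply/setP => x; rewrite !in_setU !in_set1; case: (x == h); case: (x == h'); rewrite /= ?orbT ?orbF.
  have h'in : h' \in h' |: (h |: W) by apply: setU11.
  rewrite E1 (ecD1 h'in) setU1K; last by rewrite in_setU1 negb_or (eq_sym h' h) hh' /= (RnW _ h'R).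
  rewrite (ecD1 (setU11 h W)) setU1K ?RnW //.
  have E2 : (h' |: (h |: W)) :\ h = h' |: W.
    apply/setP => x; rewrite !in_setD1 !in_setU1.
    case: (eqVneq x h) => [->|xh] /=; last by [].
    by rewrite (negbTE (RnW _ hR)) orbF (negbTE hh').
  rewrite (degD1 _ h' h) E2.
  have -> : (h \in h' |: (h |: W)) && e h' h.
    by rewrite !in_setU1 eqxx orbT /= esymm adj.
  by rewrite !oddD (negbTE (evx _ hR)) (negbTE (evx _ h'R)) eW.
set Z := R :\: L.
have ZS1 : Z \subset S1 by apply/subsetP => x; rewrite !inE => /and3P [_ -> _].
have ZC0 x : x \in Z -> exists u, x = f ord0 u.
  by rewrite !inE => /and3P [_ _ /imsetP [u _ ->]]; exists u.
have SZ : S1 :\: Z = W :|: L.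
  apply/setP => x; rewrite in_setU !in_setD in_setI.
  case: (boolP (x \in L)) => xL /=.
    by rewrite orbT (subsetP (subset_trans LR (subsetIl _ _)) x xL).
  by rewrite orbF; case: (x \in C0); case: (x \in S1).
have tri a b c : a \in Z -> b \in Z -> c \in Z -> e a b -> e b c -> e a c -> False.
  move=> /ZC0 [ua ->] /ZC0 [ub ->] /ZC0 [uc ->]; rewrite !adj; exact: Fadj_tri.
have r2 := tf_remove (leqnn #|Z|) ZS1 tri e1 (etrans (congr1 (fun X => ~~ odd (ec X)) SZ) eL).
case: (r2) => _ e2 d2.
apply: d1; apply: d2.
set g := fun i : 'I_s => f (lift ord0 i).
have gD x : x \in Dset f -> x \in C0 \/ x \in Dset g.
  rewrite inE => /existsP [i /existsP [u /eqP <-]].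
  case: (unliftP ord0 i) => [i' -> | ->]; last by left; apply: imset_f.
  by right; apply: inD.
apply: (IH g).
- by move=> i; apply: hc.
- by move=> i j u v /hdj /lift_inj.
- move=> i u; rewrite SZ in_setU; apply/orP; left.
  have fC0 : f (lift ord0 i) u \notin C0.
    apply/imsetP => [[v _ /hdj]] /eqP; apply/negP; rewrite eq_sym; exact: neq_lift.
  rewrite in_setD fC0 /=.
  case: (boolP (f (lift ord0 i) u \in S1)) => // h1.
  case: (rem1 _ (hin _ _) h1) => [|[c [sg [j [_ /hdj /eqP]]]]]; first by rewrite inD.
  by rewrite eq_sym (negbTE (neq_lift _ _)).
- move=> A AS cA.
  have AU : A \subset (S1 :\: Dset f) :|: L.
    apply/subsetP => x /(subsetP AS) /setDP [xS2 xg].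
    move: xS2; rewrite SZ in_setU => /orP [/setDP [xS1 xC]| xL]; last by rewrite in_setU xL orbT.
    rewrite in_setU in_setD xS1 andbT; apply/orP; left.
    by apply/negP => /gD [] hx; [rewrite hx in xC | rewrite hx in xg].
  apply: leq_trans (subset_leq_card AU) _.
  apply: leq_trans (leq_card_setU _ _).1 _.
  case: card1 => [c1|->]; last by rewrite cards0 add0n; lia.
  lia.
- by [].
Qed.

Lemma ec0 : ec set0 = 0.
Proof.
apply/eqP; rewrite cards_eq0; apply/eqP/setP => E; rewrite !inE subset0.
by case: (eqVneq E set0) => [->|]; rewrite ?cards0.
Qed.

Lemma claim s : forall (f : 'I_s -> FV -> T) (S : {set T}),
  (forall i, induced_copy_F e (f i)) -> (forall i j u v, f i u = f j v -> i = j) ->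
  (forall i u, f i u \in S) ->
  (forall A : {set T}, A \subset S :\: Dset f -> clique e A -> #|A| <= s + 2) ->
  ~~ odd (ec S) -> dec S.
Proof.
elim: s => [|s IHs] f S hc hdj hin hb eS.
  have D0 : Dset f = set0.
    by apply/setP => x; rewrite in_set0 inE; apply/negbTE/negP => /existsP [[i hi]].
  have tri a b c : a \in S -> b \in S -> c \in S -> e a b -> e b c -> e a c -> False.
    move=> aS bS cS eab ebc eac.
    have ab : a != b by apply: contraTneq eab => ->; rewrite eirr.
    have bc : b != c by apply: contraTneq ebc => ->; rewrite eirr.
    have ac : a != c by apply: contraTneq eac => ->; rewrite eirr.
    have := hb [set a; b; c].
    rewrite D0 setD0 setUC cardsU1 cards2 ab in_set2 negb_or (eq_sym c a) (eq_sym c b) ac bc /=.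
    suff [h1 h2]: (c |: [set a; b] \subset S) /\ clique e (c |: [set a; b]) by move/(_ h1 h2).
    split.
      by apply/subsetP => x; rewrite in_setU1 in_set2 => /orP [/eqP ->|/orP [] /eqP ->].
    apply/forallP => x; apply/implyP; rewrite in_setU1 in_set2 => hx; apply/forallP => y; apply/implyP;
      rewrite in_setU1 in_set2 => hy.
    apply/implyP => xy.
    move: hx hy xy => /orP [/eqP ->|/orP [] /eqP ->] /orP [/eqP ->|/orP [] /eqP ->];
      rewrite ?eqxx // => _; by rewrite // esymm.
  have r := tf_remove (leqnn #|S|) (subxx S) tri eS.
  case: r; first by rewrite setDv ec0.
  by move=> _ _; rewrite setDv; apply; apply: dec0.
suff H : forall n (S : {set T}), #|S| <= n -> (forall i u, f i u \in S) ->
  (forall A : {set T}, A \subset S :\: Dset f -> clique e A -> #|A| <= s.+1 + 2) ->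
  ~~ odd (ec S) -> dec S by apply: (H #|S|).
elim=> [|n IHn] {hin hb eS}S cS hin hb eS.
  by move: (hin ord0 (o0, (o0, ord0))) cS; rewrite leqn0 cards_eq0 => xS /eqP S0; rewrite S0 inE in xS.
set W := S :\: Dset f.
have nD x : x \in W -> forall i u, f i u != x.
  by move=> xW i u; apply: contraTneq xW => <-; rewrite in_setD inD.
case: (boolP [exists v in W, ~~ odd (deg S v)]) => [/existsP [v /andP [vW dv]] | noev].
  have vS : v \in S by move: vW; rewrite in_setD => /andP [].
  case: (reach1 vS eS dv) => _ e1 d1; apply: d1; apply: IHn => //.
  - by move: cS; rewrite (cardsD1 v S) vS.
  - by move=> i u; rewrite in_setD1 hin andbT; apply: nD.
  - move=> A AS; apply: hb; apply: subset_trans AS _.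
    by apply: setSD; apply: subsetDl.
have allodd v : v \in W -> odd (deg S v).
  by move=> vW; apply: contraR noev => h; apply/existsP; exists v; rewrite vW.
case: (boolP [exists u in W, exists v in W, (u != v) && ~~ e u v]) =>
    [/existsP [u /andP [uW /existsP [v /andP [vW /andP [uv nuv]]]]] | nopair].
  have uS : u \in S by move: uW; rewrite in_setD => /andP [].
  have vS : v \in S by move: vW; rewrite in_setD => /andP [].
  case: (reach2 uS vS uv nuv eS (etrans (allodd u uW) (esym (allodd v vW)))) => _ e2 d2.
  apply: d2; apply: IHn => //.
  - move: cS; rewrite (cardsD1 u S) uS (cardsD1 v (S :\ u)) !inE eq_sym uv vS /=.
    by rewrite add1n ltnS => h; apply: leq_trans (leq_addl _ _) h.
  - by move=> i u'; rewrite !in_setD1 hin !andbT; apply/andP; split; apply: nD.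
  - move=> A AS; apply: hb; apply: subset_trans AS _.
    by apply: setSD; apply: subset_trans (subsetDl _ _) (subsetDl _ _).
have cW : clique e W.
  apply/forallP => u; apply/implyP => uW; apply/forallP => v; apply/implyP => vW; apply/implyP => uv.
  apply: contraR nopair => h; apply/existsP; exists u; rewrite uW.
  by apply/existsP; exists v; rewrite vW uv.
have cardW := hb W (subxx _) cW.
apply: (step hc hdj hin _ eS); first by move: cardW; rewrite addn2 addn3.
exact: IHs.
Qed.
End G.

Theorem mainTheorem9 (T : finType) (e : rel T)
  (e_sym : symmetric e) (e_irr : irreflexive e)
  (Heven : ~~ odd (edge_count e [set: T])) :
  (exists t : nat, 0 < t /\
     (exists f : 'I_t -> FV -> T,
        (forall i, induced_copy_F e (f i)) /\
        (forall i j u v, f i u = f j v -> i = j)) /\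
     (forall A : {set T}, clique e A -> #|A| <= t)) ->
  even_decomposable e.
Proof.
case=> t [_ [[f [hc hdj]] hb]].
apply: (@claim T e e_sym e_irr t f [set: T] hc hdj) => //.
by move=> A _ /hb h; apply: leq_trans h (leq_addr _ _).
Qed.
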